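(* Let $W$ be a finite Weyl group with affine Weyl group $\tilde W=W\ltimes Z$. Let $X$ be a conjugacy class of involutions in $\tilde W$ that contains $(a,\mathbf 0)$ for some involution $a$ of $W$, and let $\hat X$ be the conjugacy class of $a$ in $W$. Suppose that $\mathcal{C}(W,\hat X)$ is connected with diameter $d$, and that there is an integer $k$ such that whenever $(a,\mathbf u)\in X$, there is some $\hat x\in\hat X$ such that $d((a,\mathbf u),(\hat x,\mathbf 0))\le k$ in $\mathcal{C}(\tilde W,X)$. Then $\mathcal{C}(\tilde W,X)$ is connected with diameter at most $d+k$.
   Context: $W$ is a finite Weyl group with root system $\Phi$ in a Euclidean space $V$, and $Z$ is the coroot lattice $L(\Phi^\vee)$ (with $\alpha^\vee=2\alpha/\langle\alpha,\alpha\rangle$) viewed as translations. $\tilde W$ consists of pairs $(a,\mathbf u)$, $a\in W$, $\mathbf u\in Z$, with multiplication $(a,\mathbf u)(b,\mathbf v)=(ab,\mathbf u^b+\mathbf v)$, where $\mathbf u\mapsto\mathbf u^b$ is the (right) linear action of $W$ on $V$. $\mathcal{C}(G,X)$ is the graph on a set $X$ of involutions of $G$ with $x,y$ adjacent iff they commute; $d$ denotes graph distance and the diameter is the maximal distance between vertices. *)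

(* Defs.v *)
From HB Require Import structures.
From mathcomp Require Import all_boot all_order all_algebra.
From mathcomp Require Import reals.
Set Implicit Arguments. Unset Strict Implicit. Unset Printing Implicit Defensive.
Import Order.TTheory GRing.Theory Num.Theory.
Local Open Scope ring_scope.

Section Weyl.
Variables (R : realType) (n : nat).

Definition dotv (u v : 'rV[R]_n) : R := (u *m v^T) 0 0.

Definition coroot (a : 'rV[R]_n) : 'rV[R]_n := (2 / dotv a a) *: a.

(* reflection s_a, acting on the right on row vectors:
   v *m refl a = v - <v, a^vee> a *)
Definition refl (a : 'rV[R]_n) : 'M[R]_n := 1%:M - (coroot a)^T *m a.

(* (reduced, crystallographic) root system spanning V *)
Definition is_root_system (Phi : seq 'rV[R]_n) : Prop :=
  [/\ forall a, a \in Phi -> a != 0,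
      row_full (\matrix_(i < size Phi) Phi`_i),
      forall a b, a \in Phi -> b \in Phi -> b *m refl a \in Phi,
      forall a b, a \in Phi -> b \in Phi ->
        exists z : int, dotv b (coroot a) = z%:~R
    & forall a (c : R), a \in Phi -> c *: a \in Phi -> c = 1 \/ c = -1].

Inductive in_weyl (Phi : seq 'rV[R]_n) : 'M[R]_n -> Prop :=
| weyl_one : in_weyl Phi 1%:M
| weyl_step M a : in_weyl Phi M -> a \in Phi -> in_weyl Phi (M *m refl a).

Definition in_coroot_lattice (Phi : seq 'rV[R]_n) (u : 'rV[R]_n) : Prop :=
  exists c : 'I_(size Phi) -> int, u = \sum_(i < size Phi) coroot Phi`_i *~ c i.

Definition in_affine (Phi : seq 'rV[R]_n) (g : 'M[R]_n * 'rV[R]_n) : Prop :=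
  in_weyl Phi g.1 /\ in_coroot_lattice Phi g.2.

Definition amul (g h : 'M[R]_n * 'rV[R]_n) : 'M[R]_n * 'rV[R]_n :=
  (g.1 *m h.1, g.2 *m h.1 + h.2).

Definition affine_conj (Phi : seq 'rV[R]_n) (x y : 'M[R]_n * 'rV[R]_n) : Prop :=
  exists g, in_affine Phi g /\ amul g y = amul x g.

Definition weyl_conj (Phi : seq 'rV[R]_n) (x y : 'M[R]_n) : Prop :=
  exists w, in_weyl Phi w /\ w *m y = x *m w.

End Weyl.

Definition cadj {T : Type} (mul : T -> T -> T) (X : T -> Prop) (x y : T) : Prop :=
  X x /\ X y /\ mul x y = mul y x.

(* within adj x y m  <->  graph distance d(x,y) <= m *)
Fixpoint within {T : Type} (adj : T -> T -> Prop) (x y : T) (m : nat) : Prop :=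
  match m with
  | 0 => x = y
  | m'.+1 => x = y \/ exists z, adj x z /\ within adj z y m'
  end.

Definition conn_diam {T : Type} (mul : T -> T -> T) (X : T -> Prop) (D : nat) : Prop :=
  (forall x y, X x -> X y -> within (cadj mul X) x y D) /\
  (exists x y, X x /\ X y /\ forall m, within (cadj mul X) x y m -> (D <= m)%N).

Definition conn_diam_le {T : Type} (mul : T -> T -> T) (X : T -> Prop) (D : nat) : Prop :=
  forall x y, X x -> X y -> within (cadj mul X) x y D.

(* Main.v *)
Require Import Defs.
From HB Require Import structures.
From mathcomp Require Import all_boot all_order all_algebra.
From mathcomp Require Import reals.
Import Order.TTheory GRing.Theory Num.Theory.
Local Open Scope ring_scope.

Lemma scal_aux (R : realType) n (x y : 'rV[R]_n) (p z : int) :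
  p%:~R *: (x - z%:~R *: y) = x *~ p - y *~ (z * p).
Proof. by rewrite scalerBr scalerA -intrM mulrC !scaler_int. Qed.

Section Aux.
Set Implicit Arguments.
Unset Strict Implicit.
Variables (R : realType) (n : nat) (Phi : seq 'rV[R]_n).

Lemma dotvC (u v : 'rV[R]_n) : dotv u v = dotv v u.
Proof. by rewrite /dotv !mxE; apply: eq_bigr => i _; rewrite !mxE mulrC. Qed.

Lemma dotvZl (s : R) (u v : 'rV[R]_n) : dotv (s *: u) v = s * dotv u v.
Proof. by rewrite /dotv -scalemxAl mxE. Qed.

Lemma reflE (b v : 'rV[R]_n) : v *m refl b = v - dotv v b *: coroot b.
Proof.
rewrite /refl mulmxBr mulmx1 mulmxA /coroot linearZ /= -scalemxAr.
rewrite [v *m b^T]mx11_scalar -scalemxAl mul_scalar_mx -/(dotv v b) !scalerA mulrC.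
by [].
Qed.

Lemma dotv_self_neq0 (b : 'rV[R]_n) : b != 0 -> dotv b b != 0.
Proof.
move=> nb; apply/negP => /eqP H; move/negP: nb; apply; apply/eqP/rowP => j.
rewrite /dotv mxE in H.
have Hpos : forall i, predT i -> 0 <= b 0 i * b^T i 0.
  move=> i _; rewrite mxE -expr2; exact: sqr_ge0.
have Hj := (@psumr_eq0P R _ predT (fun i => b 0 i * b^T i 0)) Hpos H j isT.
move: Hj; rewrite mxE; move/eqP; rewrite mulf_eq0 orbb; move/eqP => ->; by rewrite mxE.
Qed.

Lemma refl_invol (b : 'rV[R]_n) : b != 0 -> refl b *m refl b = 1%:M.
Proof.
move=> nb; rewrite /refl mulmxBr mulmx1 mulmxBl mul1mx.
have -> : (coroot b)^T *m b *m ((coroot b)^T *m b) = 2 *: ((coroot b)^T *m b).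
  rewrite mulmxA -[(coroot b)^T *m b *m (coroot b)^T]mulmxA.
  rewrite [b *m _]mx11_scalar -/(dotv b (coroot b)) mul_mx_scalar -scalemxAl.
  congr (_ *: _); rewrite /coroot dotvC dotvZl mulfVK //; exact: dotv_self_neq0.
set C := (coroot b)^T *m b; by rewrite scaler_nat mulr2n opprB addrK subrK.
Qed.

Lemma latt0 : in_coroot_lattice Phi 0.
Proof. by exists (fun _ => 0); rewrite big1 // => i _; rewrite mulr0z. Qed.

Lemma lattD u v : in_coroot_lattice Phi u -> in_coroot_lattice Phi v ->
  in_coroot_lattice Phi (u + v).
Proof.
move=> [c ->] [c' ->]; exists (fun i => c i + c' i).
by rewrite -big_split /=; apply: eq_bigr => i _; rewrite mulrzDr.
Qed.

Lemma lattN u : in_coroot_lattice Phi u -> in_coroot_lattice Phi (- u).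
Proof.
move=> [c ->]; exists (fun i => - c i).
by rewrite -sumrN; apply: eq_bigr => i _; rewrite mulrNz.
Qed.

Lemma lattB (j : 'I_(size Phi)) (m : int) :
  in_coroot_lattice Phi (coroot Phi`_j *~ m).
Proof.
exists (fun l => if l == j then m else 0).
rewrite (bigD1 j) //= eqxx big1 ?addr0 // => i /negbTE ->; by rewrite mulr0z.
Qed.

Lemma latt_comb (i j : 'I_(size Phi)) (p z : int) :
  in_coroot_lattice Phi (p%:~R *: (coroot Phi`_i - z%:~R *: coroot Phi`_j)).
Proof.
rewrite (@scal_aux R n (coroot Phi`_i) (coroot Phi`_j) p z).
apply: lattD; first exact: lattB.
by apply: lattN; exact: lattB.
Qed.


Lemma latt_refl u b : is_root_system Phi -> b \in Phi ->
  in_coroot_lattice Phi u -> in_coroot_lattice Phi (u *m refl b).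
Proof.
move=> [_ _ _ Hint _] bP [c ->]; rewrite mulmx_suml.
apply: (big_ind (in_coroot_lattice Phi)); [exact: latt0 | exact: lattD |].
move=> i _.
have iP : Phi`_i \in Phi by rewrite mem_nth.
have [z Hz] := Hint _ _ iP bP.
rewrite -scaler_int -scalemxAl reflE dotvC Hz -(nth_index 0 bP).
have jlt : (index b Phi < size Phi)%N by rewrite index_mem.
exact: (latt_comb i (Ordinal jlt) (c i) z).
Qed.

Lemma weyl_mul M N : in_weyl Phi M -> in_weyl Phi N -> in_weyl Phi (M *m N).
Proof.
move=> HM; elim => [|N' b _ IH bP]; first by rewrite mulmx1.
rewrite mulmxA; exact: weyl_step.
Qed.

Lemma weyl_refl b : b \in Phi -> in_weyl Phi (refl b).
Proof. by move=> bP; rewrite -[refl b]mul1mx; apply: weyl_step => //; exact: weyl_one. Qed.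

Lemma weyl_inv w : is_root_system Phi -> in_weyl Phi w ->
  exists w', [/\ in_weyl Phi w', w' *m w = 1%:M & w *m w' = 1%:M].
Proof.
move=> Hr; elim => [|M b _ [M' [HM' H1 H2]] bP].
  by exists 1%:M; rewrite mulmx1; split => //; exact: weyl_one.
have nb : b != 0 by case: Hr => H _ _ _ _; exact: H.
exists (refl b *m M'); split.
- by apply: weyl_mul => //; exact: weyl_refl.
- by rewrite mulmxA -[refl b *m M' *m M]mulmxA H1 mulmx1 refl_invol.
- by rewrite mulmxA -[M *m refl b *m refl b]mulmxA refl_invol // mulmx1 H2.
Qed.

Lemma latt_weyl u w : is_root_system Phi -> in_weyl Phi w ->
  in_coroot_lattice Phi u -> in_coroot_lattice Phi (u *m w).
Proof.
move=> Hr Hw; elim: Hw u => [|M b _ IH bP] u Hu; first by rewrite mulmx1.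
rewrite mulmxA; apply: latt_refl => //; exact: IH.
Qed.

Definition e : 'M[R]_n * 'rV[R]_n := (1%:M, 0).

Lemma amulA (g h k : 'M[R]_n * 'rV[R]_n) :
  amul (amul g h) k = amul g (amul h k).
Proof. by rewrite /amul /= !mulmxA mulmxDl addrA. Qed.

Lemma amul1 z : amul e z = z.
Proof. by case: z => z1 z2; rewrite /amul /= mul1mx mul0mx add0r. Qed.

Lemma amulr1 z : amul z e = z.
Proof. by case: z => z1 z2; rewrite /amul /= !mulmx1 addr0. Qed.

Lemma affine_mul g h : is_root_system Phi -> in_affine Phi g -> in_affine Phi h ->
  in_affine Phi (amul g h).
Proof.
move=> Hr [g1 g2] [h1 h2]; split; first exact: weyl_mul.
by apply: lattD => //; exact: latt_weyl.
Qed.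

Lemma affine_inv g : is_root_system Phi -> in_affine Phi g ->
  exists gi, [/\ in_affine Phi gi, amul g gi = e & amul gi g = e].
Proof.
case: g => w u Hr [/= Hw Hu].
have [w' [Hw' H1 H2]] := weyl_inv Hr Hw.
exists (w', - (u *m w')); split.
- split => /=; first exact Hw'.
  by apply: lattN; exact: latt_weyl.
- by rewrite /amul /= H2 subrr.
- by rewrite /amul /= H1 mulNmx -mulmxA H1 mulmx1 addNr.
Qed.

End Aux.

Lemma within_refl {T} (adj : T -> T -> Prop) x m : within adj x x m.
Proof. by case: m => [|m] /=; [|left]. Qed.

Lemma within_mono {T} (adj : T -> T -> Prop) x y m m' :
  within adj x y m -> (m <= m')%N -> within adj x y m'.
Proof.
elim: m x m' => [|m IH] x m'.
  by move=> /= -> _; exact: within_refl.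
case: m' => [|m'] //= [->|[z [Hz Hw]]] Hm; first by left.
by right; exists z; split => //; exact: IH Hw Hm.
Qed.

Lemma within_trans {T} (adj : T -> T -> Prop) x y z m m' :
  within adj x y m -> within adj y z m' -> within adj x z (m + m').
Proof.
elim: m x => [|m IH] x.
  by move=> /= ->.
case=> [->|[w [Hw Hwy]]] Hyz.
  by apply: within_mono Hyz _; rewrite leq_addl.
rewrite addSn /=; right; exists w; split => //; exact: IH.
Qed.

Lemma within_sym {T} (adj : T -> T -> Prop) x y m :
  (forall x y, adj x y -> adj y x) -> within adj x y m -> within adj y x m.
Proof.
move=> Hs; elim: m x => [|m IH] x; first by move=> /= ->.
case=> [->|[w [Hw Hwy]]]; first exact: within_refl.
rewrite -addn1; apply: within_trans (IH _ Hwy) _.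
by right; exists x; split => //; exact: Hs.
Qed.

Lemma within_map {T U} (adj : T -> T -> Prop) (adj' : U -> U -> Prop) (f : T -> U) x y m :
  (forall x y, adj x y -> adj' (f x) (f y)) -> within adj x y m -> within adj' (f x) (f y) m.
Proof.
move=> Hf; elim: m x => [|m IH] x; first by move=> /= ->.
case=> [->|[w [Hw Hwy]]]; first exact: within_refl.
by right; exists (f w); split; [exact: Hf | exact: IH].
Qed.

Section Conj.
Set Implicit Arguments.
Unset Strict Implicit.
Variables (R : realType) (n : nat) (Phi : seq 'rV[R]_n) (A : 'M[R]_n * 'rV[R]_n).
Hypothesis Hr : is_root_system Phi.

Definition cj (h hi : 'M[R]_n * 'rV[R]_n) z := amul hi (amul z h).

Lemma cj_adj h hi x y : in_affine Phi h -> amul h hi = e R n ->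
  cadj (@amul R n) (affine_conj Phi A) x y ->
  cadj (@amul R n) (affine_conj Phi A) (cj h hi x) (cj h hi y).
Proof.
move=> Hh Hhi.
have HX z : affine_conj Phi A z -> affine_conj Phi A (cj h hi z).
  move=> [g [Hg Hgz]]; exists (amul g h); split; first exact: affine_mul.
  rewrite /cj !amulA -[amul h (amul hi _)]amulA Hhi amul1 -amulA Hgz.
  by rewrite amulA.
move=> [Xx [Xy Hc]]; split; [exact: HX | split; [exact: HX|]].
rewrite /cj !amulA -[amul h (amul hi _)]amulA Hhi amul1.
rewrite -[amul h (amul hi (amul x h))]amulA Hhi amul1.
by rewrite -![amul x (amul y h)]amulA -![amul y (amul x h)]amulA Hc.
Qed.

Lemma cjK h hi z : amul h hi = e R n -> cj hi h (cj h hi z) = z.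
Proof.
by move=> H; rewrite /cj !amulA H amulr1 -amulA H amul1.

Qed.

End Conj.

Theorem proposition2p7 (R : realType) (n : nat) (Phi : seq 'rV[R]_n)
  (a : 'M[R]_n) (d k : nat) :
  is_root_system Phi ->
  in_weyl Phi a -> a *m a = 1%:M -> a != 1%:M ->
  let X := affine_conj Phi (a, 0) in
  let Xhat := weyl_conj Phi a in
  conn_diam (fun x y : 'M[R]_n => x *m y) Xhat d ->
  (forall u, X (a, u) ->
     exists xh, Xhat xh /\ within (cadj (@amul R n) X) (a, u) (xh, 0) k) ->
  conn_diam_le (@amul R n) X (d + k).
Proof.
move=> Hr Ha _ _ X Xhat [Hdiam _] Hk x y Xx Xy.
have Xx' := Xx.
case: Xx' => g [Hg Hgx].
have [gi [Hgi Hggi Hgig]] := affine_inv Hr Hg.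
have HAx : cj gi g x = (a, 0) by rewrite /cj -amulA Hgx amulA Hggi amulr1.
have Xy' : X (cj gi g y).
  by have [] := @cj_adj R n Phi (a, 0) Hr gi g y y Hgi Hgig (conj Xy (conj Xy erefl)).
set y' := cj gi g y in Xy'.
suff Hw : within (cadj (@amul R n) X) (a, 0) y' (d + k).
  have := within_map (fun x y => @cj_adj R n Phi (a, 0) Hr g gi x y Hg Hggi) Hw.
  have E1 : cj g gi (a, 0) = x by rewrite -HAx cjK.
  have E2 : cj g gi y' = y by rewrite /y' cjK.
  by rewrite E1 E2.
case: (Xy') => [[w u] [[/= Hw Hu] Hy']].
have [w' [Hw' Hw'w Hww']] := weyl_inv Hr Hw.
case Ey : y' Hy' => [b v] Hy'.
move: Hy'; rewrite /amul /= mul0mx add0r => [[Hwb Hv]].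
have Hh2 : in_affine Phi (w', 0) by split => //; exact: latt0.
have Hh2' : in_affine Phi (w, 0) by split => //; exact: latt0.
have Hhh : amul (w', 0) (w, 0) = e R n by rewrite /amul /= Hw'w mul0mx addr0.
have Hhh' : amul (w, 0) (w', 0) = e R n by rewrite /amul /= Hww' mul0mx addr0.
have E1 : cj (w', 0) (w, 0) (b, v) = (a, v *m w').
  rewrite /cj /amul /= mul0mx add0r addr0 mulmxA Hwb -mulmxA Hww' mulmx1 //.
have E2 : cj (w', 0) (w, 0) (a, 0) = (w *m (a *m w'), 0).
  by rewrite /cj /amul /= !mul0mx !addr0.
have Xa : X (a, v *m w').
  rewrite -E1 -Ey.
  by have [] := @cj_adj R n Phi (a, 0) Hr (w', 0) (w, 0) y' y' Hh2 Hhh (conj Xy' (conj Xy' erefl)).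
have [xh [Xxh Hwk]] := Hk _ Xa.
have Xc : Xhat (w *m (a *m w')).
  by exists w'; split => //; rewrite mulmxA Hw'w mul1mx.
have Hlift c : Xhat c -> X (c, 0).
  move=> [w0 [Hw0 Hc]]; exists (w0, 0); split; first by split => //; exact: latt0.
  by rewrite /amul /= !mul0mx !addr0 Hc.
have Hd := Hdiam _ _ Xc Xxh.
have Hd' : within (cadj (@amul R n) X) (w *m (a *m w'), 0) (xh, 0) d.
  apply: (within_map (f := fun c => (c, 0)) _ Hd).
  move=> c1 c2 [X1 [X2 H12]]; split; first exact: Hlift.
  split; first exact: Hlift.
  by rewrite /amul /= !mul0mx !addr0 H12.
have Hsym : forall x y, cadj (@amul R n) X x y -> cadj (@amul R n) X y x.
  by move=> ? ? [? [? ?]]; split => //; split.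
have Htot := within_trans Hd' (within_sym Hsym Hwk).
rewrite -E1 -E2 in Htot.
have := within_map (fun x y => @cj_adj R n Phi (a, 0) Hr (w, 0) (w', 0) x y Hh2' Hhh') Htot.
by rewrite !cjK.
Qed.
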